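(* Let $g(x)$ and $a(x)$ be coprime real univariate polynomials with $\deg(g)=m$. If $a(x)>0$ for all $x\in\{x\in\mathbb{R}\mid g(x)=0\}$, then there exists a polynomial $t\in\mathbb{R}[x]_m$ such that $a\equiv t^2\pmod g$.
   Context: $\mathbb{R}[x]_m$ is the space of real univariate polynomials of degree at most $m$. For univariate polynomials, $a\equiv b\pmod g$ means $a=b+wg$ for some $w\in\mathbb{R}[x]$. Coprime means the greatest common divisor is a constant. *)

(* Defs.v *)
From mathcomp Require Import all_boot all_order all_algebra.
From mathcomp Require Export Rstruct.
From Stdlib Require Export Reals.

(* Main.v *)
Require Import Defs.
From mathcomp Require Import all_boot all_order all_algebra.
From mathcomp Require Import Rstruct.
From mathcomp Require Import complex ring lra zify.
Import Order.TTheory GRing.Theory Num.Theory.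
Set Implicit Arguments.
Unset Strict Implicit.
Local Open Scope ring_scope.
Section Gen.
Variable F : fieldType.
Implicit Types p q a t g : {poly F}.

Lemma crt_sq a g1 g2 t1 t2 : coprimep g1 g2 ->
  g1 %| a - t1 ^+ 2 -> g2 %| a - t2 ^+ 2 -> exists t, g1 * g2 %| a - t ^+ 2.
Proof.
move=> /Bezout_eq1_coprimepP [[u v] /= Huv] H1 H2.
exists (t1 * (v * g2) + t2 * (u * g1)).
rewrite Gauss_dvdp; last by apply/Bezout_eq1_coprimepP; exists (u, v).
apply/andP; split.
  have -> : t1 * (v * g2) + t2 * (u * g1) = t1 + g1 * (u * (t2 - t1)) + t1 * (u * g1 + v * g2 - 1) by ring.
  rewrite Huv subrr mulr0 addr0.
  have -> : a - (t1 + g1 * (u * (t2 - t1))) ^+ 2 = (a - t1 ^+ 2) - g1 * ((u * (t2 - t1)) * (2%:R * t1 + g1 * (u * (t2 - t1)))) by ring.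
  by rewrite dvdp_sub // dvdp_mulIl.
have -> : t1 * (v * g2) + t2 * (u * g1) = t2 + g2 * (v * (t1 - t2)) + t2 * (u * g1 + v * g2 - 1) by ring.
rewrite Huv subrr mulr0 addr0.
have -> : a - (t2 + g2 * (v * (t1 - t2))) ^+ 2 = (a - t2 ^+ 2) - g2 * ((v * (t1 - t2)) * (2%:R * t2 + g2 * (v * (t1 - t2)))) by ring.
by rewrite dvdp_sub // dvdp_mulIl.
Qed.

Lemma hensel_sq a g t1 : (2%:R : F) != 0 -> coprimep a g ->
  g %| a - t1 ^+ 2 -> exists t, g ^+ 2 %| a - t ^+ 2.
Proof.
move=> h2 /Bezout_eq1_coprimepP [[u v] /= Huv] /dvdpP [e He].
set c := (2%:R : F)^-1.
have hc : c * 2%:R = 1 by rewrite mulVf.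
exists (t1 + (c%:P * e * u * t1) * g).
have Ha : a = t1 ^+ 2 + e * g by rewrite -He; ring.
apply/dvdpP; exists (e * (v + u * e) - (c%:P * e * u * t1) ^+ 2).
have -> : a - (t1 + c%:P * e * u * t1 * g) ^+ 2 =
  (e * (v + u * e) - (c%:P * e * u * t1) ^+ 2) * g ^+ 2
  + e * g * (1 - (u * a + v * g)) + e * g * u * t1 ^+ 2 * (1 - (c * 2%:R)%:P).
  rewrite Ha; ring.
by rewrite Huv hc subrr !mulr0 !addr0.
Qed.
End Gen.

Local Notation toC := (real_complex R).
Local Notation "f ^C" := (map_poly toC f) (at level 1, format "f ^C").

Definition pz (z : R[i]) : {poly R} :=
  if complex.Im z == 0 then 'X - (complex.Re z)%:P
  else 'X ^+ 2 - (2%:R * complex.Re z)%:P * 'X + (complex.Re z ^+ 2 + complex.Im z ^+ 2)%:P.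

Lemma conj_mapC (f : {poly R}) : map_poly conjc f^C = f^C.
Proof.
rewrite -map_poly_comp; apply: eq_map_poly => x /=.
by rewrite /= oppr0.
Qed.

Lemma rootJ (f : {poly R}) z : root f^C (z^*)%C = root f^C z.
Proof. by rewrite -complex_root_conj conj_mapC. Qed.

Lemma pzC z : (pz z)^C = if complex.Im z == 0 then 'X - z%:P
   else ('X - z%:P) * ('X - (z^*)%C%:P).
Proof.
rewrite /pz; case: z => x y /=; case: eqP => [->|hy].
  by rewrite rmorphB /= map_polyX map_polyC.
rewrite rmorphD rmorphB !rmorphM /= !map_polyX !map_polyC /= -expr2.
have -> : ('X - (x +i* y)%C%:P) * ('X - (x -i* y)%C%:P) =
  'X ^+ 2 - ((x +i* y)%C + (x -i* y)%C)%:P * 'X + ((x +i* y)%C * (x -i* y)%C)%:P.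
  rewrite polyCD polyCM; ring.
rewrite -polyCM; congr (_ - _%:P * _ + _%:P).
  by rewrite -rmorphM /=; simpc; congr (Complex _ _); ring.
by rewrite /=; simpc; congr (Complex _ _); ring.
Qed.

Lemma Jneq (z : R[i]) : complex.Im z != 0 -> (z^*)%C != z.
Proof.
case: z => x y /= hy; rewrite eq_complex /= eqxx /=.
apply: contra hy => /eqP h; apply/eqP; lra.
Qed.

Lemma pz_dvd (f : {poly R}) (z : R[i]) : root f^C z -> pz z %| f.
Proof.
move=> hz; rewrite -(dvdp_map toC) pzC; case: ifP => hIm.
  by rewrite dvdp_XsubCl.
rewrite Gauss_dvdp; last by rewrite coprimep_XsubC root_XsubC Jneq // hIm.
by rewrite !dvdp_XsubCl hz rootJ hz.
Qed.

Lemma pz_coprime (f : {poly R}) (z : R[i]) : ~~ root f^C z -> coprimep (pz z) f.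
Proof.
move=> hz; rewrite -(coprimep_map toC) pzC coprimep_sym; case: ifP => hIm.
  by rewrite coprimep_XsubC.
by rewrite coprimep_sym coprimepMl !(coprimep_sym _ f^C) !coprimep_XsubC rootJ hz.
Qed.

Lemma size_pz (z : R[i]) : (1 < size (pz z))%N.
Proof.
rewrite -(size_map_poly toC) pzC; case: ifP => _.
  by rewrite size_XsubC.
by rewrite size_mul ?polyXsubC_eq0 // !size_XsubC.
Qed.

Lemma lin_interp (z w : R[i]) : complex.Im z != 0 ->
  let u := complex.Im w / complex.Im z in
  toC u * z + toC (complex.Re w - u * complex.Re z) = w.
Proof.
case: z => x y; case: w => p q /= hy.
simpc; congr (Complex _ _).
  by ring.
by field.
Qed.

Lemma pz_base (a g : {poly R}) (z : R[i]) : root g^C z ->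
  (forall x, root g x -> 0 < a.[x]) -> exists t0, pz z %| a - t0 ^+ 2.
Proof.
move=> hz hpos; case hIm: (complex.Im z == 0).
  set r := complex.Re z.
  have zE : z = toC r by rewrite /r; clear r; case: z hIm {hz} => x y /= /eqP ->.
  have hr : root g r by move: hz; rewrite zE /root horner_map fmorph_eq0.
  exists (Num.sqrt a.[r])%:P.
  rewrite /pz hIm dvdp_XsubCl /root !hornerE sqr_sqrtr ?subrr //.
  by apply: ltW; apply: hpos.
set w := sqrtc (a^C.[z]).
set u := complex.Im w / complex.Im z.
set v := complex.Re w - u * complex.Re z.
exists (u%:P * 'X + v%:P); apply: pz_dvd.
have ht : (u%:P * 'X + v%:P)^C.[z] = w.
  rewrite rmorphD rmorphM /= map_polyX !map_polyC !hornerE /= /v /u.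
  by apply: lin_interp; rewrite hIm.
by rewrite /root rmorphB rmorphXn /= hornerD hornerN horner_exp ht /w sqr_sqrtc subrr.
Qed.

Lemma key (a : {poly R}) n : forall g : {poly R}, (size g <= n)%N -> g != 0 ->
  coprimep g a -> (forall x, root g x -> 0 < a.[x]) ->
  exists t, g %| a - t ^+ 2.
Proof.
elim: n => [|n IH] g hs g0 hc hpos.
  by move: hs; rewrite leqn0 size_poly_eq0 (negbTE g0).
case: (ltnP 1 (size g)) => hsz; last first.
  exists 0; have : size g == 1%N.
    by rewrite eqn_leq hsz /= lt0n size_poly_eq0.
  by rewrite size_poly_eq1 => /eqp_dvdl ->; rewrite dvd1p.
have : size g^C != 1%N by rewrite size_map_poly neq_ltn hsz orbT.
case/closed_rootP => z hz.
have hdv := pz_dvd hz.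
set g1 := g %/ pz z.
have gE : g = g1 * pz z by rewrite divpK.
have pz0 : pz z != 0 by rewrite -size_poly_eq0 -lt0n (ltn_trans _ (size_pz z)).
have g10 : g1 != 0 by apply: contra g0 => /eqP h; rewrite gE h mul0r.
have hs1 : (size g1 <= n)%N.
  move: hs; rewrite gE size_mul // => h.
  have := size_pz z; have : (0 < size g1)%N by rewrite lt0n size_poly_eq0.
  move: h; rewrite -subn1; move: (size g1) (size (pz z)) => p q; lia.
have hg1g : g1 %| g by rewrite gE dvdp_mulIl.
have hc1 : coprimep g1 a.
  by rewrite coprimep_sym; apply: (coprimep_dvdl hg1g); rewrite coprimep_sym.
have hpos1 : forall x, root g1 x -> 0 < a.[x].
  by move=> x hx; apply: hpos; rewrite gE rootM hx.
have [t1 ht1] := IH g1 hs1 g10 hc1 hpos1.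
case: (boolP (root g1^C z)) => h1.
  have h2 : (2%:R : R) != 0 by rewrite pnatr_eq0.
  have hca : coprimep a g1 by rewrite coprimep_sym.
  have [t ht] := hensel_sq h2 hca ht1.
  exists t; apply: dvdp_trans ht.
  by rewrite gE expr2 dvdp_mul // pz_dvd.
have hc2 : coprimep g1 (pz z) by rewrite coprimep_sym pz_coprime.
have [t0 ht0] := pz_base hz hpos.
have [t ht] := crt_sq hc2 ht1 ht0.
by exists t; rewrite gE.
Qed.

Theorem proposition3p8 (m : nat) (g a : {poly R}) :
  size g = m.+1 ->
  coprimep g a ->
  (forall x : R, root g x -> 0 < a.[x]) ->
  exists t : {poly R}, (size t <= m.+1)%N /\
    exists w : {poly R}, a = t ^+ 2 + w * g.
Proof.
move=> hsize hc hpos.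
have g0 : g != 0 by rewrite -size_poly_eq0 hsize.
have [t ht] := key (leqnn (size g)) g0 hc hpos.
exists (t %% g); split.
  by apply: ltnW; rewrite -hsize ltn_modp.
have hd : g %| a - (t %% g) ^+ 2.
  have -> : a - (t %% g) ^+ 2 = (a - t ^+ 2) + (t %/ g * (t + t %% g)) * g.
    move: (t %/ g) (t %% g) (divp_eq t g) => q r ->; ring.
  by rewrite dvdp_add // dvdp_mull.
exists ((a - (t %% g) ^+ 2) %/ g).
by rewrite divpK // addrC subrK.
Qed.
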